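(* Let $n\ge 1$. The maximum success probability of any strategy for the New Hats-on-a-line Game with two hat colours and $n$ players is $1-2^{-n}$.
   Context: The New Hats-on-a-line Game with $q$ colours and $n$ players: players $P_1,\dots,P_n$ stand in a line, and each player $P_i$ receives a hat whose colour $c_i$ is chosen uniformly at random from a fixed set of $q$ colours, independently of the other hats. Player $P_i$ sees exactly the hat colours $c_{i+1},\dots,c_n$. The players respond sequentially in the order $P_1,\dots,P_n$; each response is either a colour (a guess of one's own hat colour) or ''pass'', and each player hears all previous responses. No other communication is allowed, apart from agreeing on a strategy beforehand. A strategy specifies, for each player $P_i$, his response as a function of the colours he sees and the responses he has heard. The players win if at least one player guesses correctly and no player guesses incorrectly; the success probability of a strategy is the probability that the players win. Here $q=2$. *)

(* Defs.v *)
From mathcomp Require Import all_boot all_order all_algebra.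
Set Implicit Arguments. Unset Strict Implicit. Unset Printing Implicit Defensive.
Import Order.TTheory GRing.Theory Num.Theory.

(* Players are indexed 0, ..., n-1 (player P_{i+1} of the paper is index i).
   A response is an option bool: None = "pass", Some b = guess colour b. *)
Definition hats (n : nat) := {ffun 'I_n -> bool}.
Definition response := option bool.

(* A (deterministic) strategy: player i's response as a function of the
   hat assignment and the list of responses heard so far (those of players
   0..i-1, in order). *)
Definition strategy (n : nat) := nat -> hats n -> seq response -> response.

Definition legal n (s : strategy n) : Prop :=
  forall (i : nat) (c c' : hats n) (h : seq response),
    (forall j : 'I_n, i < j -> c j = c' j) -> s i c h = s i c' h.

Fixpoint play n (s : strategy n) (c : hats n) (k : nat) : seq response :=
  match k with
  | 0 => [::]
  | k'.+1 => let h := play s c k' in rcons h (s k' c h)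
  end.

Definition responses n (s : strategy n) (c : hats n) : seq response :=
  play s c n.

Definition wins n (s : strategy n) (c : hats n) : bool :=
  let r := responses s c in
  [exists j : 'I_n, nth None r j == Some (c j)] &&
  [forall j : 'I_n, (nth None r j == None) || (nth None r j == Some (c j))].

Definition success_prob n (s : strategy n) : rat :=
  (#|[set c : hats n | wins s c]|%:R / (2 ^ n)%:R)%R.

(* Main.v *)
Require Import Defs.
From mathcomp Require Import all_boot all_order all_algebra.
Import Order.TTheory GRing.Theory Num.Theory.

Section Aux.
Variable n : nat.
Implicit Types (s : strategy n) (c : hats n).

Lemma size_play s c k : size (play s c k) = k.
Proof. by elim: k => //= k IH; rewrite size_rcons IH. Qed.

Lemma play_nth s c k j : (j < k)%N -> nth None (play s c k) j = s j c (play s c j).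
Proof.
elim: k => // k IH; rewrite ltnS leq_eqVlt => /orP[/eqP->|hj] /=.
  by rewrite nth_rcons size_play ltnn eqxx.
by rewrite nth_rcons size_play hj IH.
Qed.

Fixpoint lose s c k m h : bool :=
  match m with
  | 0 => true
  | m'.+1 => match s k c h with
             | None => lose s c k.+1 m' (rcons h None)
             | Some b => [exists j : 'I_n, (val j == k) && (c j != b)]
             end
  end.

Lemma lose_exists s : legal s -> forall m k h, k + m = n -> exists c, lose s c k m h.
Proof.
move=> Ls; elim=> [|m IH] k h hkm; first by exists [ffun=> false].
have hk1 : k.+1 + m = n by rewrite addSnnS.
have [c1 Hc1] := IH k.+1 (rcons h None) hk1.
case E: (s k c1 h) => [b|].
  have kn : (k < n)%N by rewrite -hkm -addSnnS leq_addr.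
  pose c := [ffun j : 'I_n => if val j == k then ~~ b else c1 j].
  exists c => /=.
  have -> : s k c h = s k c1 h.
    apply: Ls => j hj; rewrite ffunE.
    by have -> : (val j == k) = false by apply/negbTE; rewrite neq_ltn hj orbT.
  rewrite E; apply/existsP; exists (Ordinal kn) => /=.
  by rewrite eqxx ffunE /= eqxx; case: (b).
by exists c1 => /=; rewrite E.
Qed.

Lemma lose_spec s c : forall m k, k + m = n -> lose s c k m (play s c k) ->
  (exists j : 'I_n, (k <= j)%N /\ s j c (play s c j) = Some (~~ c j)) \/
  (forall j : 'I_n, (k <= j)%N -> s j c (play s c j) = None).
Proof.
elim=> [|m IH] k hkm /=.
  move=> _; right => j hj; exfalso.
  by move: (ltn_ord j); rewrite ltnNge (leq_trans _ hj) // -hkm addn0.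
case E: (s k c (play s c k)) => [b|].
  case/existsP => j /andP[/eqP jk cb]; left; exists j; split; first by rewrite jk.
  by rewrite jk E; move: cb; case: (b); case: (c j).
have Hp : rcons (play s c k) None = play s c k.+1 by rewrite /= E.
have hk1 : k.+1 + m = n by rewrite addSnnS.
rewrite Hp => /(IH k.+1 hk1) [[j [hj H]]|H].
  by left; exists j; split => //; apply: ltnW.
right => j; rewrite leq_eqVlt => /orP[/eqP jk|hj]; last exact: H.
by rewrite -jk.
Qed.

Lemma lose_nwin s c : lose s c 0 n [::] -> ~~ wins s c.
Proof.
move=> L; have [[j [_ H]]|H] := @lose_spec s c n 0 (add0n n) L.
  rewrite /wins negb_and; apply/orP; right; rewrite negb_forall; apply/existsP.
  exists j; rewrite /responses play_nth // H.
  by case: (c j).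
rewrite /wins negb_and; apply/orP; left; rewrite negb_exists; apply/forallP => j.
by rewrite /responses play_nth // H.
Qed.

Definition strat : strategy n := fun i c h =>
  if all (fun r => r == None) h && [forall j : 'I_n, (i < j)%N ==> ~~ c j]
  then Some true else None.

Lemma strat_legal : legal strat.
Proof.
move=> i c c' h E; rewrite /strat.
have -> : [forall j : 'I_n, (i < j)%N ==> ~~ c j] = [forall j : 'I_n, (i < j)%N ==> ~~ c' j].
  by apply: eq_forallb => j; case: ltnP => hj //=; rewrite E.
by [].
Qed.

Lemma strat_win c : (exists j, c j) -> wins strat c.
Proof.
case=> j0 cj0.
case: (arg_maxnP (fun j : 'I_n => val j) cj0) => k ck kmax.
have Hpre : forall j, (j <= k)%N -> play strat c j = nseq j None.
  elim=> // j IH hj /=; rewrite IH ?(ltnW hj) //.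
  rewrite /strat all_nseq /=.
  have -> : [forall j0 : 'I_n, (j < j0)%N ==> ~~ c j0] = false.
    apply/negbTE; rewrite negb_forall; apply/existsP; exists k.
    by rewrite hj ck.
  rewrite andbF; by elim: (j) {IH hj} => //= i ->.
have Hk : strat k c (play strat c k) = Some true.
  have F : [forall j0 : 'I_n, (k < j0)%N ==> ~~ c j0].
    apply/forallP => j; apply/implyP => hj; apply/negP => cj.
    by have := kmax j cj; rewrite /geq /= leqNgt hj.
  by rewrite Hpre // /strat all_nseq /= F orbT.
have Hpost : forall j : 'I_n, (k < j)%N -> strat j c (play strat c j) = None.
  move=> j hj; rewrite /strat.
  have -> : all (fun r => r == None) (play strat c j) = false.
    apply/negbTE/allPn; exists (nth None (play strat c j) k).
      by rewrite mem_nth // size_play.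
    by rewrite play_nth // Hk.
  by [].
rewrite /wins /responses; apply/andP; split.
  by apply/existsP; exists k; rewrite play_nth // Hk ck.
apply/forallP => j; rewrite play_nth //.
case: (ltngtP k j) => hj.
- by rewrite Hpost.
- rewrite Hpre ?(ltnW hj) // /strat all_nseq /=.
  have -> : [forall j0 : 'I_n, (j < j0)%N ==> ~~ c j0] = false.
    by apply/negbTE; rewrite negb_forall; apply/existsP; exists k; rewrite hj ck.
  by rewrite andbF.
- have -> : j = k by apply: val_inj; rewrite /= hj.
  by rewrite Hk ck.
Qed.

End Aux.

Local Open Scope ring_scope.

Theorem theorem2 (n : nat) (hn : (1 <= n)%N) :
  (exists s : strategy n, legal s /\ success_prob s = 1 - 1 / (2 ^ n)%:R) /\
  (forall s : strategy n, legal s -> success_prob s <= 1 - 1 / (2 ^ n)%:R).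
Proof.
have cardT : #|hats n| = (2 ^ n)%N by rewrite card_ffun card_bool card_ord.
have pos : (0 < 2 ^ n)%N by rewrite expn_gt0.
have d0 : (2 ^ n)%:R != 0 :> rat by rewrite pnatr_eq0 -lt0n.
have E : 1 - 1 / (2 ^ n)%:R = ((2 ^ n).-1)%:R / (2 ^ n)%:R :> rat.
  have h2 : (2^n)%:R = ((2^n).-1)%:R + 1 :> rat by rewrite -{1}(prednK pos) -addn1 natrD.
  apply: (mulIf d0); rewrite mulrBl mul1r !divfK //.
  by rewrite mulVf // mul1r {1}h2 addrK.
  
split.
  exists (strat n); split; first exact: strat_legal.
  rewrite E /success_prob; congr (_%:R / _).
  pose z : hats n := [ffun=> false].
  have -> : [set c | wins (strat n) c] = [set~ z].
    apply/setP => c; rewrite !inE.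
    case: (boolP (c == z)) => [/eqP->|nz] /=.
      apply/negbTE; rewrite /wins negb_and; apply/orP; right.
      rewrite negb_forall; apply/existsP; exists (Ordinal hn).
      have F : [forall j : 'I_n, (0 < j)%N ==> ~~ z j].
        by apply/forallP=> j; rewrite ffunE implybT.
      by rewrite /responses play_nth // /strat /= F ffunE.
    apply: (@strat_win n); apply/existsP; move: nz; apply: contraR.
    rewrite negb_exists => /forallP H; apply/eqP/ffunP => j.
    by rewrite ffunE; apply/negbTE; apply: H.
  by rewrite cardsC1 cardT.
move=> s Ls; rewrite E /success_prob.
rewrite ler_pM2r ?invr_gt0 ?ltr0n // ler_nat.
have [c Hc] := @lose_exists n s Ls n 0 [::] (add0n n).
have nw := @lose_nwin n s c Hc.
rewrite -ltnS prednK // -cardT; apply: proper_card; apply/properP; split.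
  by apply/subsetP.
by exists c; rewrite ?inE.
Qed.
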